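(* For $n\ge0$ let $\alpha_n$ be the finite knock sequence $1^{2^n},2^{2^n},\dots,d^{2^n}$ (knock $2^n$ consecutive times on door $1$, then $2^n$ times on door $2$, ..., then $2^n$ times on door $d$). If all doors of a configuration $\mathcal{C}$ of $d$ doors have the same fundamental distribution, then $$\mathbb{T}_{\mathcal{C}}(\alpha_0\cdot\alpha_1\cdot\alpha_2\cdots)=\Theta(\mathbb{T}_{\mathcal{C}}),$$ with universal constants.
   Context: Dependent doors model. Fix an integer $d\ge 2$ and doors $1,\dots,d$, all initially closed; once a door opens it stays open forever. A configuration $\mathcal{C}$ specifies for each door $i$ a function $\phi_i^{\mathcal{C}}$ mapping every finite nonempty sequence $(X_1,\dots,X_n)$ of subsets of $\{1,\dots,i-1\}$ to $[0,1]$: $\phi_i^{\mathcal{C}}(X_1,\dots,X_n)$ is the probability that door $i$ has opened during $n$ knocks on it, where $X_j$ is the set of open doors among $\{1,\dots,i-1\}$ at the time of the $j$-th knock on door $i$ (so a closed door $i$ opens at its $n$-th knock with conditional probability $(\phi_i(X_1..X_n)-\phi_i(X_1..X_{n-1}))/(1-\phi_i(X_1..X_{n-1}))$, with $\phi_i$ of the empty sequence equal to $0$). Configurations are assumed monotone ($\phi_i(X')\le\phi_i(X)$ whenever $X'$ is a, not necessarily consecutive, subsequence of $X$) and positively correlated ($\phi_i(X'_1,\dots,X'_n)\le\phi_i(X_1,\dots,X_n)$ whenever $X'_j\subseteq X_j$ for all $j$). The fundamental distribution of door $i$ is $p_i(n)=1-\phi_i(\{1,\dots,i-1\}^n)$ ($p_i(0)=1$),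 and $E_i=\sum_{n\ge0}p_i(n)$ is assumed finite. A knock sequence $\pi$ is an infinite sequence of door indices, executed in order without any feedback; $\mathbb{T}_{\mathcal{C}}(\pi)$ is the expected number of knocks until all $d$ doors are open, and $\mathbb{T}_{\mathcal{C}}=\inf_\pi \mathbb{T}_{\mathcal{C}}(\pi)$. *)

(* Defs.v *)
From HB Require Import structures.
From mathcomp Require Import all_boot all_order all_algebra.
From mathcomp Require Import all_classical all_reals all_analysis.
Set Implicit Arguments. Unset Strict Implicit. Unset Printing Implicit Defensive.
Import Order.TTheory GRing.Theory Num.Theory.
Local Open Scope ring_scope.

(* Doors 1..d of the paper are represented by the ordinals 0..d-1 : 'I_d
   (paper door i+1 <-> ordinal i).  A configuration is given by the family
   phi i : seq {set 'I_d} -> R ; phi i [:: X_1; ...; X_n] is the probability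
   that door i has opened during n knocks on it, X_j being the set of open
   doors among the lower-indexed doors at the j-th knock. *)

Section DoorModel.
Variables (R : realType) (d : nat).

Definition noopen : {set 'I_d} := finset.set0.

Definition below (i : 'I_d) : {set 'I_d} := [set j : 'I_d | (j < i)%N].

Definition seq_below (i : 'I_d) (xs : seq {set 'I_d}) : bool :=
  all (fun X : {set 'I_d} => X \subset below i) xs.

Definition valid_config (phi : 'I_d -> seq {set 'I_d} -> R) : Prop :=
  [/\ (forall i, phi i [::] = 0),
      (forall i xs, seq_below i xs -> 0 <= phi i xs <= 1),
      (forall i xs ys, seq_below i xs -> seq_below i ys ->
          subseq ys xs -> phi i ys <= phi i xs) &
      (forall i xs ys, seq_below i xs -> seq_below i ys ->
          all2 (fun Y X : {set 'I_d} => Y \subset X) ys xs -> phi i ys <= phi i xs)].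

Definition fund (phi : 'I_d -> seq {set 'I_d} -> R) (i : 'I_d) (n : nat) : R :=
  1 - phi i (nseq n (below i)).

Definition finite_expectations (phi : 'I_d -> seq {set 'I_d} -> R) : Prop :=
  forall i, (\sum_(0 <= n <oo) (fund phi i n)%:E < +oo)%E.

Definition same_fundamental (phi : 'I_d -> seq {set 'I_d} -> R) : Prop :=
  forall i j n, fund phi i n = fund phi j n.

(* The random process.  A history h = [:: S_1; ...; S_t] lists the sets of
   open doors after each of the first t knocks (S_0 = noopen, the empty set). *)
Section Process.
Variables (phi : 'I_d -> seq {set 'I_d} -> R) (pi : nat -> 'I_d).

Definition hist_at (h : seq {set 'I_d}) (k : nat) : {set 'I_d} :=
  nth noopen (noopen :: h) k.

Definition knock_obs (h : seq {set 'I_d}) (k m : nat) : seq {set 'I_d} :=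
  [seq hist_at h j :&: below (pi k) | j <- iota 0 m & pi j == pi k].

(* conditional probability of the transition S_k -> S_{k+1} at knock k
   (0-based), the knock being on door pi k *)
Definition step_prob (h : seq {set 'I_d}) (k : nat) : R :=
  let i := pi k in
  let prev := hist_at h k in
  let next := hist_at h k.+1 in
  if i \in prev then (next == prev)%:R
  else
    let a := phi i (knock_obs h k k) in
    let b := phi i (knock_obs h k k.+1) in
    let q := (b - a) / (1 - a) in
    if next == i |: prev then q
    else if next == prev then 1 - q else 0.

Definition hist_prob (h : seq {set 'I_d}) : R :=
  \prod_(k < size h) step_prob h k.

Definition prob_all_open (t : nat) : R :=
  \sum_(h : t.-tuple {set 'I_d}) hist_prob h * (last noopen h == [set: 'I_d])%:R.

(* expected number of knocks until all doors are open:
   E[tau] = sum_{t >= 0} P(tau > t) *)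
Definition exp_time : \bar R :=
  (\sum_(0 <= t <oo) (1 - prob_all_open t)%:E)%E.

End Process.

Definition opt_time (phi : 'I_d -> seq {set 'I_d} -> R) : \bar R :=
  ereal_inf (range (exp_time phi)).

End DoorModel.

Definition alpha_block (d n : nat) : seq nat :=
  flatten [seq nseq (2 ^ n) i | i <- iota 0 d].

(* k-th knock (0-based) of alpha_0 . alpha_1 . alpha_2 ... ; the first k+1
   blocks have total length >= k+1, so this is the correct k-th entry. *)
Definition alpha_nat (d k : nat) : nat :=
  nth 0 (flatten [seq alpha_block d n | n <- iota 0 k.+1]) k.

(* the same knock sequence as doors 'I_d (the %% d is a no-op) *)
Definition alpha_knock (d : nat) (hd : (0 < d)%N) : nat -> 'I_d :=
  fun k => Ordinal (ltn_pmod (alpha_nat d k) hd).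

(* Main.v *)
Require Import Defs.
From HB Require Import structures.
From mathcomp Require Import all_boot all_order all_algebra.
From mathcomp Require Import all_classical all_reals all_analysis.
From mathcomp Require Import zify ring lra.
Import Order.TTheory GRing.Theory Num.Theory.
Local Open Scope ring_scope.
Set Implicit Arguments. Unset Strict Implicit. Unset Printing Implicit Defensive.

Section Tup.
Variables (R : realType) (T : finType).

Lemma rcons_belast_eq (h : seq T) S x s :
  x :: s = rcons h S -> belast x s = h /\ last x s = S.
Proof.
rewrite lastI => /eqP; rewrite eqseq_rcons => /andP[/eqP-> /eqP->]; by [].
Qed.

Lemma sum_tuple_rcons t (F : seq T -> R) :
  \sum_(h : t.+1.-tuple T) F h = \sum_(h : t.-tuple T) \sum_(S : T) F (rcons h S).
Proof.
rewrite pair_bigA /=.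
rewrite (reindex (fun p : t.-tuple T * T => [tuple of rcons p.1 p.2])) //=.
exists (fun u : t.+1.-tuple T =>
   ([tuple of belast (thead u) (behead u)], last (thead u) (behead u))).
- move=> [h S] _ /=.
  have E : thead [tuple of rcons h S] :: behead [tuple of rcons h S] = rcons h S.
    by move: (congr1 val (tuple_eta [tuple of rcons h S])) => /= <-.
  have [E1 E2] := rcons_belast_eq E.
  congr (_, _) => //; apply/val_inj => /=; exact: E1.
- move=> u _ /=; apply/val_inj => /=.
  by rewrite -lastI; move: (congr1 val (tuple_eta u)) => /= <-.
Qed.
End Tup.


Section Proc.
Variables (R : realType) (d : nat) (phi : 'I_d -> seq {set 'I_d} -> R) (pi : nat -> 'I_d).
Local Notation T := {set 'I_d}.
Local Notation hist := (seq {set 'I_d}).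
Local Notation Lh h := (last (noopen d) h).

Lemma hist_at_rcons (h : hist) S j : (j <= size h)%N -> hist_at (rcons h S) j = hist_at h j.
Proof. by rewrite /hist_at -rcons_cons nth_rcons /= ltnS => ->. Qed.

Lemma hist_at_rcons_last (h : hist) S : hist_at (rcons h S) (size h).+1 = S.
Proof. by rewrite /hist_at -rcons_cons nth_rcons /= ltnn eqxx. Qed.

Lemma hist_at_size (h : hist) : hist_at h (size h) = Lh h.
Proof. by rewrite /hist_at (last_nth (noopen d)). Qed.

Lemma knock_obs_rcons (h : hist) S k m : (m <= (size h).+1)%N ->
  knock_obs pi (rcons h S) k m = knock_obs pi h k m.
Proof.
move=> hm; rewrite /knock_obs; apply/eq_in_map => j.
rewrite mem_filter mem_iota => /andP[_ /andP[_ hj]].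
by rewrite hist_at_rcons // -ltnS (leq_trans hj).
Qed.

Lemma step_prob_rcons (h : hist) S k : (k < size h)%N ->
  step_prob phi pi (rcons h S) k = step_prob phi pi h k.
Proof.
move=> hk; rewrite /step_prob !hist_at_rcons ?knock_obs_rcons //; lia.
Qed.

Lemma hist_prob_rcons (h : hist) S :
  hist_prob phi pi (rcons h S) = hist_prob phi pi h * step_prob phi pi (rcons h S) (size h).
Proof.
rewrite /hist_prob size_rcons big_ord_recr /=; congr (_ * _).
by apply: eq_bigr => k _; rewrite step_prob_rcons.
Qed.

Definition qk (h : hist) : R :=
  let k := size h in let j := pi k in
  let a := phi j (knock_obs pi h k k) in let b := phi j (knock_obs pi h k k.+1) in
  (b - a) / (1 - a).

Definition Kern (h : hist) (f : T -> R) : R :=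
  \sum_(S : T) step_prob phi pi (rcons h S) (size h) * f S.

Lemma KernE h f : Kern h f =
  if pi (size h) \in Lh h then f (Lh h)
  else qk h * f (pi (size h) |: Lh h) + (1 - qk h) * f (Lh h).
Proof.
rewrite /Kern.
under eq_bigr => S _ do
  rewrite /step_prob hist_at_rcons // hist_at_size hist_at_rcons_last
          knock_obs_rcons // knock_obs_rcons //.
rewrite -/(qk h) /=.
case: ifP => iP.
  rewrite (bigD1 (Lh h)) //= eqxx mul1r big1 ?addr0 // => S /negbTE ->.
  by rewrite mul0r.
have ne : (pi (size h) |: Lh h) != Lh h.
  by apply/negP => /eqP E; move: iP; rewrite -E setU11.
rewrite (bigD1 (pi (size h) |: Lh h)) //= eqxx.
rewrite (bigD1 (Lh h)) /=; last by rewrite eq_sym.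
rewrite eq_sym (negbTE ne) eqxx addrA big1 ?addr0 // => S /andP[n1 n2].
by rewrite (negbTE n1) (negbTE n2) mul0r.
Qed.

Fixpoint W t (F : hist -> R) : R :=
  if t is t'.+1 then W t' (fun h => Kern h (fun S => F (rcons h S))) else F [::].

Lemma bridge t (F : hist -> R) :
  \sum_(h : t.-tuple T) hist_prob phi pi h * F h = W t F.
Proof.
elim: t F => [|t IH] F /=.
  rewrite (big_pred1 [tuple]) /= ?/hist_prob ?big_ord0 ?mul1r // => u.
  by rewrite /= [u]tuple0; apply/eqP.
rewrite (sum_tuple_rcons t (fun h => hist_prob phi pi h * F h)) -IH; apply: eq_bigr => h _.
rewrite /Kern mulr_sumr; apply: eq_bigr => S _.
by rewrite hist_prob_rcons mulrA.
Qed.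


Lemma W_ext t (F G : hist -> R) : (forall h, size h = t -> F h = G h) -> W t F = W t G.
Proof.
elim: t F G => [|t IH] F G /= E; first exact: E.
apply: IH => h sh; apply: eq_bigr => S _; by rewrite E // size_rcons sh.
Qed.

Lemma Kern_lin h a b f g :
  Kern h (fun S => a * f S + b * g S) = a * Kern h f + b * Kern h g.
Proof. by rewrite !KernE; case: ifP => _; ring. Qed.

Lemma Kern_const h c : Kern h (fun _ => c) = c.
Proof. by rewrite KernE; case: ifP => _; ring. Qed.

Lemma W_lin t a b (F G : hist -> R) :
  W t (fun h => a * F h + b * G h) = a * W t F + b * W t G.
Proof.
elim: t F G => [|t IH] F G //=.
rewrite -IH; apply: W_ext => h _; exact: Kern_lin.
Qed.

Lemma W_const t c : W t (fun _ => c) = c.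
Proof.
elim: t => [|t IH] //=; rewrite -[RHS]IH; apply: W_ext => h _; exact: Kern_const.
Qed.

Definition mono (h : hist) := path (fun A B : T => A \subset B) (noopen d) h.

Lemma knock_obs_seq_below h k m : seq_below (pi k) (knock_obs pi h k m).
Proof. by apply/allP => X /mapP[j _ ->]; apply: subsetIr. Qed.

Lemma knock_obs_subseq h k m : subseq (knock_obs pi h k m) (knock_obs pi h k m.+1).
Proof.
by rewrite /knock_obs -addn1 iotaD filter_cat map_cat prefix_subseq.
Qed.

Hypothesis hphi : valid_config phi.

Lemma phi01 i xs : seq_below i xs -> 0 <= phi i xs <= 1.
Proof. by case: hphi => _ H _ _; apply: H. Qed.

Lemma qk01 h : 0 <= qk h <= 1.
Proof.
rewrite /qk /=.
set a := phi _ (knock_obs pi h (size h) (size h)).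
set b := phi _ (knock_obs pi h (size h) (size h).+1).
have /andP[a0 a1] : 0 <= a <= 1 by apply: phi01; exact: knock_obs_seq_below.
have /andP[b0 b1] : 0 <= b <= 1 by apply: phi01; exact: knock_obs_seq_below.
have ab : a <= b.
  case: hphi => _ _ H _; apply: H; rewrite ?knock_obs_seq_below //.
  exact: knock_obs_subseq.
have [ea|nea] := eqVneq a 1.
  have eb : b = 1 by apply/eqP; rewrite eq_le b1 -ea ab.
  by rewrite ea eb subrr mul0r lexx ler01.
have pa : 0 < 1 - a by rewrite subr_gt0 lt_neqAle nea a1.
rewrite divr_ge0 ?subr_ge0 //= ler_pdivrMr // mul1r.
by rewrite lerD2r.
Qed.

Lemma Kern_le h f g : f (Lh h) <= g (Lh h) ->
  (pi (size h) \notin Lh h -> f (pi (size h) |: Lh h) <= g (pi (size h) |: Lh h)) ->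
  Kern h f <= Kern h g.
Proof.
move=> h1 h2; rewrite !KernE; case: ifP => // iP.
have /andP[q0 q1] := qk01 h.
apply: lerD; apply: ler_wpM2l => //; first by apply: h2; rewrite iP.
by rewrite subr_ge0.
Qed.

Lemma mono_rcons h S : mono (rcons h S) = mono h && (Lh h \subset S).
Proof. by rewrite /mono rcons_path. Qed.

Lemma W_le t (F G : hist -> R) :
  (forall h, size h = t -> mono h -> F h <= G h) -> W t F <= W t G.
Proof.
elim: t F G => [|t IH] F G /= E; first by apply: E.
apply: IH => h sh mh; apply: Kern_le => [|_]; apply: E; rewrite ?size_rcons ?sh //.
  by rewrite mono_rcons mh subxx.
by rewrite mono_rcons mh finset.subsetUr.
Qed.


Lemma Kern_scale h c f : Kern h (fun S => c * f S) = c * Kern h f.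
Proof. by rewrite !KernE; case: ifP => _; ring. Qed.

Section Door.
Variable i : 'I_d.
Definition lproj (h : hist) := map (fun S : T => S :&: below i) h.
Definition obs (h : hist) m := [seq hist_at h j :&: below i | j <- iota 0 m & pi j == i].
Definition Phi (h : hist) := phi i (obs h (size h)).
Definition LM (g : hist -> R) := forall h1 h2, lproj h1 = lproj h2 -> g h1 = g h2.

Lemma noopenI B : noopen d :&: B = noopen d.
Proof. by rewrite /noopen finset.set0I. Qed.

Lemma hist_at_lproj h j : hist_at (lproj h) j = hist_at h j :&: below i.
Proof.
rewrite /hist_at.
have -> : noopen d :: lproj h = map (fun S : T => S :&: below i) (noopen d :: h).
  by rewrite /= noopenI.
case: (ltnP j (size h).+1) => hj; first by rewrite (nth_map (noopen d)).
by rewrite !nth_default ?size_map // noopenI.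
Qed.

Lemma lproj_hist h1 h2 j : lproj h1 = lproj h2 ->
  hist_at h1 j :&: below i = hist_at h2 j :&: below i.
Proof. by move=> E; rewrite -!hist_at_lproj E. Qed.

Lemma lproj_size h1 h2 : lproj h1 = lproj h2 -> size h1 = size h2.
Proof. by move=> /(congr1 size); rewrite !size_map. Qed.

Lemma lproj_rcons h S : lproj (rcons h S) = rcons (lproj h) (S :&: below i).
Proof. by rewrite /lproj map_rcons. Qed.

Lemma last_lproj h : Lh (lproj h) = Lh h :&: below i.
Proof.
by rewrite /lproj; case/lastP: h => [|h S]; rewrite ?map_rcons ?last_rcons //= noopenI.
Qed.

Lemma lproj_last h1 h2 : lproj h1 = lproj h2 -> Lh h1 :&: below i = Lh h2 :&: below i.
Proof. by move=> E; rewrite -!last_lproj E. Qed.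

Lemma obs_rcons h S m : (m <= (size h).+1)%N -> obs (rcons h S) m = obs h m.
Proof.
move=> hm; rewrite /obs; apply/eq_in_map => j.
rewrite mem_filter mem_iota => /andP[_ /andP[_ hj]].
by rewrite hist_at_rcons // -ltnS (leq_trans hj).
Qed.

Lemma obs_succ_ne h m : pi m != i -> obs h m.+1 = obs h m.
Proof.
by move=> ne; rewrite /obs -addn1 iotaD filter_cat /= (negbTE ne) cats0.
Qed.

Lemma knock_obsE h k m : pi k = i -> knock_obs pi h k m = obs h m.
Proof. by move=> E; rewrite /knock_obs E. Qed.

Lemma obs_LM h1 h2 m : lproj h1 = lproj h2 -> obs h1 m = obs h2 m.
Proof. by move=> E; apply: eq_map => j; apply: lproj_hist. Qed.

Lemma Phi_rcons h S : Phi (rcons h S) = phi i (obs h (size h).+1).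
Proof. by rewrite /Phi size_rcons obs_rcons. Qed.

Lemma knock_obs_LM h1 h2 k m : (pi k <= i)%N -> lproj h1 = lproj h2 ->
  knock_obs pi h1 k m = knock_obs pi h2 k m.
Proof.
move=> le E; rewrite /knock_obs; apply: eq_map => j.
have sub : below (pi k) \subset below i.
  by apply/fintype.subsetP => x; rewrite !inE => /leq_trans; apply.
by rewrite -(finset.setIidPr sub) !finset.setIA (lproj_hist j E).
Qed.

Lemma qk_LM h1 h2 : (pi (size h1) <= i)%N -> lproj h1 = lproj h2 -> qk h1 = qk h2.
Proof.
move=> le E; have s := lproj_size E.
by rewrite /qk -s !(@knock_obs_LM h1 h2 (size h1) _ le E).
Qed.

Lemma setU1I_below P : (i |: P) :&: below i = P :&: below i.
Proof.
rewrite finset.setIUl.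
have -> : [set i] :&: below i = finset.set0.
  by apply/setP => x; rewrite !inE; case: eqP => // ->; rewrite ltnn.
by rewrite finset.set0U.
Qed.

Lemma setU1I_notbelow (j : 'I_d) (P : {set 'I_d}) : ~~ (j < i)%N -> (j |: P) :&: below i = P :&: below i.
Proof.
move=> nj; rewrite finset.setIUl.
have -> : [set j] :&: below i = finset.set0.
  by apply/setP => x; rewrite !inE; case: eqP => // ->; rewrite (negbTE nj).
by rewrite finset.set0U.
Qed.

Lemma obs_seq_below h m : seq_below i (obs h m).
Proof. by apply/allP => X /mapP[j _ ->]; apply: subsetIr. Qed.

Lemma obs_subseq h m : subseq (obs h m) (obs h m.+1).
Proof. by rewrite /obs -addn1 iotaD filter_cat map_cat prefix_subseq. Qed.

Lemma Phi_step h m : (1 - phi i (obs h m)) *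
   (1 - (phi i (obs h m.+1) - phi i (obs h m)) / (1 - phi i (obs h m)))
   = 1 - phi i (obs h m.+1).
Proof.
set a := phi i (obs h m); set b := phi i (obs h m.+1).
have /andP[b0 b1] : 0 <= b <= 1 by apply: phi01; exact: obs_seq_below.
have ab : a <= b.
  by case: hphi => _ _ H _; apply: H; rewrite ?obs_seq_below ?obs_subseq.
have [ea|nea] := eqVneq a 1.
  have eb : b = 1 by apply/eqP; rewrite eq_le b1 -ea ab.
  by rewrite ea eb !subrr mul0r.
have na : 1 - a != 0 by rewrite subr_eq0 eq_sym.
by field.
Qed.

Lemma KL t g : LM g ->
  W t (fun h => (i \notin Lh h)%:R * g h) = W t (fun h => (1 - Phi h) * g h).
Proof.
elim: t g => [|t IH] g Lg /=.
  case: hphi => h0 _ _ _.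
  by rewrite /Phi /obs /= /noopen finset.in_set0 h0 subr0.
case: (eqVneq (pi t) i) => ept.
  pose qi h := (phi i (obs h (size h).+1) - phi i (obs h (size h))) / (1 - phi i (obs h (size h))).
  pose g1 h := (1 - qi h) * g (rcons h (Lh h)).
  transitivity (W t (fun h => (i \notin Lh h)%:R * g1 h)).
    apply: W_ext => h sh.
    have qE : qk h = qi h by rewrite /qk /qi sh !knock_obsE // ept.
    rewrite KernE qE sh ept !last_rcons /g1.
    case: ifP => iP; first by rewrite iP /= !mul0r.
    by rewrite finset.setU11 iP /=; ring.
  rewrite IH; last first.
    move=> h1 h2 E; rewrite /g1 /qi (lproj_size E) !(obs_LM _ E); congr (_ * _).
    by apply: Lg; rewrite !lproj_rcons E -!last_lproj E.
  apply: W_ext => h sh; rewrite KernE /g1 /qi.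
  rewrite !Phi_rcons.
  have gE : g (rcons h (pi (size h) |: Lh h)) = g (rcons h (Lh h)).
    by apply: Lg; rewrite sh ept !lproj_rcons setU1I_below.
  rewrite gE /Phi mulrA Phi_step.
  by case: ifP => _; ring.
pose G h := Kern h (fun S => g (rcons h S)).
transitivity (W t (fun h => (i \notin Lh h)%:R * G h)).
  apply: W_ext => h sh; rewrite /G !KernE sh !last_rcons.
  case: ifP => jP //.
  by rewrite finset.in_setU1 eq_sym (negbTE ept) /=; ring.
rewrite IH; last first.
  move=> h1 h2 E; rewrite /G !KernE -(lproj_size E).
  have LE := lproj_last E.
  case: (ltnP (pi (size h1)) i) => ji.
    have -> : (pi (size h1) \in Lh h2) = (pi (size h1) \in Lh h1).
      have := congr1 (fun A : {set 'I_d} => pi (size h1) \in A) LE.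
      by rewrite /= !inE ji !andbT.
    rewrite (qk_LM (ltnW ji) E).
    have -> : g (rcons h1 (Lh h1)) = g (rcons h2 (Lh h2)).
      by apply: Lg; rewrite !lproj_rcons E LE.
    have -> : g (rcons h1 (pi (size h1) |: Lh h1)) = g (rcons h2 (pi (size h1) |: Lh h2)).
      by apply: Lg; rewrite !lproj_rcons E !finset.setIUl LE.
    by [].
  have nji : ~~ (pi (size h1) < i)%N by rewrite -leqNgt.
  have -> : g (rcons h1 (pi (size h1) |: Lh h1)) = g (rcons h1 (Lh h1)).
    by apply: Lg; rewrite !lproj_rcons setU1I_notbelow.
  have -> : g (rcons h2 (pi (size h1) |: Lh h2)) = g (rcons h2 (Lh h2)).
    by apply: Lg; rewrite !lproj_rcons setU1I_notbelow.
  have -> : g (rcons h1 (Lh h1)) = g (rcons h2 (Lh h2)).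
    by apply: Lg; rewrite !lproj_rcons E LE.
  by case: ifP; case: ifP => _ _; ring.
apply: W_ext => h sh; rewrite /G.
have -> : Kern h (fun S => (1 - Phi (rcons h S)) * g (rcons h S)) =
  Kern h (fun S => (1 - Phi h) * g (rcons h S)).
  by apply: eq_bigr => S _; rewrite Phi_rcons /Phi sh obs_succ_ne.
by rewrite Kern_scale.
Qed.
End Door.

Lemma W_scale t a (F : hist -> R) : W t (fun h => a * F h) = a * W t F.
Proof.
have := W_lin t a 0 F F; rewrite mul0r addr0 => <-.
by apply: W_ext => h _; rewrite mul0r addr0.
Qed.

Lemma W_sub t (F G : hist -> R) : W t (fun h => F h - G h) = W t F - W t G.
Proof.
have := W_lin t 1 (-1) F G; rewrite !mulN1r !mul1r => <-.
by apply: W_ext => h _; rewrite mulN1r mul1r.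
Qed.

Lemma fund01 i n : 0 <= fund phi i n <= 1.
Proof.
rewrite /fund.
have /andP[a b] : 0 <= phi i (nseq n (below i)) <= 1.
  apply: phi01; rewrite /seq_below all_nseq; apply/orP; right; exact: subxx.
by rewrite subr_ge0 b /= lerBlDr lerDl.
Qed.

Lemma all2_nseq (r : T -> T -> bool) (s : seq T) x :
  all2 r s (nseq (size s) x) = all (fun y => r y x) s.
Proof. by elim: s => //= y s ->. Qed.

Definition K (i : 'I_d) t := count (fun j => pi j == i) (iota 0 t).

Lemma Phi_le_fund i h : Phi i h <= 1 - fund phi i (K i (size h)).
Proof.
have -> : 1 - fund phi i (K i (size h)) = phi i (nseq (K i (size h)) (below i)).
  by rewrite /fund; ring.
case: hphi => _ _ _ H; apply: H.
- rewrite /seq_below all_nseq; apply/orP; right; exact: subxx.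
- exact: obs_seq_below.
have -> : K i (size h) = size (obs i h (size h)) by rewrite /obs size_map size_filter.
rewrite all2_nseq; apply/allP => X /mapP[j _ ->]; exact: subsetIr.
Qed.

Definition Ind j (h : hist) : R := \prod_(i : 'I_d | (i < j)%N) (i \in Lh h)%:R.

Lemma Ind_ge0 j h : 0 <= Ind j h.
Proof. by apply: prodr_ge0 => i _; rewrite ler0n. Qed.

Lemma Ind_LM j (J : 'I_d) : (j <= J)%N -> LM J (Ind j).
Proof.
move=> jJ h1 h2 E; rewrite /Ind; apply: eq_bigr => i ij.
have := congr1 (fun A : {set 'I_d} => i \in A) (lproj_last E).
rewrite /= !inE (leq_trans ij jJ) !andbT => ->; by [].
Qed.

Lemma prod_bound t j : (j <= d)%N ->
  W t (Ind j) <= \prod_(i : 'I_d | (i < j)%N) (1 - fund phi i (K i t)).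
Proof.
elim: j => [|j IH] hj.
  rewrite big_pred0 // -(W_const t 1); apply: W_le => h _ _.
  by rewrite /Ind big_pred0.
have jd : (j < d)%N by [].
pose J := Ordinal jd.
have split_ind : forall (F : 'I_d -> R), \prod_(i : 'I_d | (i < j.+1)%N) F i = F J * \prod_(i : 'I_d | (i < j)%N) F i.
  move=> F; rewrite (bigD1 J) //=; congr (_ * _); apply: eq_bigl => i.
  by rewrite ltnS leq_eqVlt -val_eqE /=; case: (ltngtP i j).
rewrite split_ind.
have E1 : W t (Ind j.+1) = W t (fun h => Ind j h - (J \notin Lh h)%:R * Ind j h).
  apply: W_ext => h _; rewrite /Ind split_ind; case: (J \in Lh h) => /=; ring.
rewrite E1 W_sub KL; last exact: Ind_LM.
rewrite -W_sub.
have E2 : W t (fun h => Ind j h - (1 - Phi J h) * Ind j h) = W t (fun h => Phi J h * Ind j h).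
  by apply: W_ext => h _; ring.
rewrite E2.
apply: (@le_trans _ _ (W t (fun h => (1 - fund phi J (K J t)) * Ind j h))).
  apply: W_le => h sh _; apply: ler_wpM2r; first exact: Ind_ge0.
  by rewrite -sh; apply: Phi_le_fund.
rewrite W_scale; apply: ler_wpM2l; last exact: IH (ltnW hj).
by have /andP[_ ?] := fund01 J (K J t); rewrite subr_ge0.
Qed.

Lemma Ind_d h : Ind d h = (Lh h == [set: 'I_d])%:R.
Proof.
rewrite /Ind (eq_bigl predT) => [|i]; last by rewrite ltn_ord.
case: eqP => [->|ne].
  by rewrite big1 // => i _; rewrite finset.in_setT.
have [i iN] : exists i, i \notin Lh h.
  apply/existsP; rewrite -negb_forall; apply/negP => /forallP A; apply: ne.
  by apply/setP => i; rewrite finset.in_setT A.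
by rewrite (bigD1 i) //= (negbTE iN) mul0r.
Qed.

Lemma prob_all_open_W t :
  prob_all_open phi pi t = W t (fun h => (Lh h == [set: 'I_d])%:R).
Proof. by rewrite /prob_all_open (bridge t (fun h => (Lh h == [set: 'I_d])%:R)). Qed.

Lemma prod_bound_all t :
  prob_all_open phi pi t <= \prod_(i : 'I_d) (1 - fund phi i (K i t)).
Proof.
rewrite prob_all_open_W.
have := prod_bound t (leqnn d).
rewrite (eq_bigl predT) => [|i]; last by rewrite ltn_ord.
by rewrite (W_ext (G := fun h => (Lh h == [set: 'I_d])%:R)) // => h _; rewrite Ind_d.
Qed.

Lemma W_sum t (I : finType) (F : I -> hist -> R) :
  W t (fun h => \sum_(i : I) F i h) = \sum_(i : I) W t (F i).
Proof.
have gen : forall r : seq I, W t (fun h => \sum_(i <- r) F i h) = \sum_(i <- r) W t (F i).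
  elim => [|x r IH].
    transitivity (W t (fun _ => 0)); first by apply: W_ext => h _; rewrite big_nil.
    by rewrite W_const big_nil.
  rewrite big_cons -IH.
  have := W_lin t 1 1 (F x) (fun h => \sum_(i <- r) F i h); rewrite !mul1r => <-.
  by apply: W_ext => h _; rewrite big_cons !mul1r.
exact: gen.
Qed.

Lemma W_prefix t e F : (e <= t)%N ->
  (forall h S, (e <= size h)%N -> F (rcons h S) = F h) -> W t F = W e F.
Proof.
move=> le HF; elim: t le => [|t IH] le.
  by move: le; rewrite leqn0 => /eqP ->.
case: (eqVneq e t.+1) => [-> //|ne].
have le' : (e <= t)%N by move: le ne; rewrite leq_eqVlt => /orP[/eqP->|]; rewrite ?eqxx.
rewrite /= -IH //; apply: W_ext => h sh.
rewrite -[RHS](Kern_const h); apply: eq_bigr => S _; by rewrite HF // sh.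
Qed.

Lemma mono_hist h j j' : mono h -> (j <= j')%N -> (j' <= size h)%N ->
  hist_at h j \subset hist_at h j'.
Proof.
move=> mh jj' j'h; rewrite /hist_at.
have tr : transitive (fun A B : T => A \subset B).
  by move=> y x z xy yz; exact: (fintype.subset_trans xy yz).
have rf : reflexive (fun A B : T => A \subset B) by move=> x; apply: subxx.
have := @sorted_leq_nth _ _ tr rf (noopen d) (noopen d :: h) mh j j'.
apply; rewrite ?inE /= ?ltnS //; exact: leq_trans jj' j'h.
Qed.

Lemma union_pointwise h (b : 'I_d -> nat) m :
  mono h -> (forall i j : 'I_d, (j < i)%N -> (b j + m <= b i)%N) ->
  (forall i, (b i + m <= size h)%N) ->
  (1 - (Lh h == [set: 'I_d])%:R : R) <=
  \sum_(i : 'I_d) (i \notin hist_at h (b i + m))%:R * (below i \subset hist_at h (b i))%:R.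
Proof.
move=> mh H2 H3.
case: eqP => [_|ne].
  by rewrite subrr; apply: sumr_ge0 => i _; rewrite mulr_ge0 ?ler0n.
rewrite subr0.
have [c cN] : exists c, c \notin Lh h.
  apply/existsP; rewrite -negb_forall; apply/negP => /forallP A; apply: ne.
  by apply/setP => i; rewrite finset.in_setT A.
have cN' : c \notin hist_at h (b c + m).
  apply: contra cN => cin; rewrite -hist_at_size.
  by apply: (fintype.subsetP (mono_hist mh (H3 c) (leqnn _))).
pose P n := [exists i : 'I_d, (val i == n) && (i \notin hist_at h (b i + m))].
have exP : exists n, P n by exists (val c); apply/existsP; exists c; rewrite eqxx.
case: (ex_minnP exP) => n0 /existsP[i0 /andP[/eqP ei0 i0N]] minP.
have sub : below i0 \subset hist_at h (b i0).
  apply/fintype.subsetP => j; rewrite inE => ji.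
  have jin : j \in hist_at h (b j + m).
    apply/negPn/negP => jN.
    have : (n0 <= j)%N by apply: minP; apply/existsP; exists j; rewrite eqxx.
    by rewrite -ei0 leqNgt ji.
  apply: (fintype.subsetP (mono_hist mh (H2 _ _ ji) _)) => //.
  by apply: leq_trans (H3 i0); apply: leq_addr.
rewrite (bigD1 i0) //= i0N sub /= mulr1 lerDl.
by apply: sumr_ge0 => i _; rewrite mulr_ge0 ?ler0n.
Qed.

Lemma map_constE (A B : Type) (s : seq A) (x : B) : map (fun _ => x) s = nseq (size s) x.
Proof. by elim: s => //= a s ->. Qed.

Lemma generic_bound t (b : 'I_d -> nat) m :
  (forall (i : 'I_d) s, (b i <= s < b i + m)%N -> pi s = i) ->
  (forall i j : 'I_d, (j < i)%N -> (b j + m <= b i)%N) ->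
  (forall i, (b i + m <= t)%N) ->
  1 - prob_all_open phi pi t <= \sum_(i : 'I_d) fund phi i m.
Proof.
move=> H1 H2 H3.
rewrite prob_all_open_W.
have -> : 1 - W t (fun h => (Lh h == [set: 'I_d])%:R) =
    W t (fun h => 1 - (Lh h == [set: 'I_d])%:R) by rewrite W_sub W_const.
apply: le_trans; first apply: (W_le (G := fun h => \sum_(i : 'I_d)
   (i \notin hist_at h (b i + m))%:R * (below i \subset hist_at h (b i))%:R)).
  by move=> h sh mh; apply: union_pointwise => // i; rewrite sh.
rewrite (W_sum t (fun i h => (i \notin hist_at h (b i + m))%:R * (below i \subset hist_at h (b i))%:R)). apply: ler_sum => i _.
pose g h : R := (below i \subset hist_at h (b i))%:R.
rewrite (@W_prefix t (b i + m)) //; last first.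
  by move=> h S hs; rewrite !hist_at_rcons // (leq_trans (leq_addr _ _) hs).
rewrite (W_ext (G := fun h => (i \notin Lh h)%:R * g h)); last first.
  by move=> h sh; rewrite -sh hist_at_size.
rewrite KL; last first.
  move=> h1 h2 E; rewrite /g.
  have sI : forall X : {set 'I_d}, (below i \subset X) = (below i \subset X :&: below i).
    by move=> X; rewrite finset.subsetI subxx andbT.
  by rewrite sI (lproj_hist _ E) -sI.
rewrite -(W_const (b i + m) (fund phi i m)); apply: W_le => h sh mh.
rewrite /g; case Bs: (below i \subset hist_at h (b i)); last first.
  by rewrite mulr0; have /andP[] := fund01 i m.
rewrite mulr1 /fund lerD2l lerN2 /Phi sh.
case: hphi => _ _ H _; apply: H.
- exact: obs_seq_below.
- rewrite /seq_below all_nseq; apply/orP; right; exact: subxx.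
rewrite /obs iotaD filter_cat map_cat add0n.
have -> : [seq j <- iota (b i) m | pi j == i] = iota (b i) m.
  apply/all_filterP/allP => s; rewrite mem_iota => hs; apply/eqP; exact: H1.
have -> : [seq hist_at h j :&: below i | j <- iota (b i) m] = nseq m (below i).
  rewrite -{2}(size_iota (b i) m) -map_constE; apply/eq_in_map => j.
  rewrite mem_iota => /andP[j1 j2]; apply/finset.setIidPr.
  apply: fintype.subset_trans Bs _; apply: mono_hist => //.
  by rewrite sh ltnW.
exact: suffix_subseq.
Qed.

End Proc.

Local Close Scope ring_scope.

Lemma size_flat_nseq c a n : size (flatten [seq nseq c x | x <- iota a n]) = (n * c)%N.
Proof.
elim: n a => [|n IH] a //=; by rewrite size_cat size_nseq IH mulSn.
Qed.

Lemma nth_flat_nseq c a n i r : (i < n)%N -> (r < c)%N ->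
  nth 0%N (flatten [seq nseq c x | x <- iota a n]) (i * c + r) = (a + i)%N.
Proof.
elim: n a i => [|n IH] a i //= ilt rc.
rewrite nth_cat size_nseq.
case: i ilt => [|i] ilt.
  by rewrite mul0n add0n rc nth_nseq rc addn0.
have -> : (i.+1 * c + r < c)%N = false by rewrite mulSn -addnA ltnNge leq_addr.
rewrite mulSn -addnA addKn IH //; lia.
Qed.

Lemma size_block d n : size (alpha_block d n) = (d * 2 ^ n)%N.
Proof. by rewrite /alpha_block size_flat_nseq. Qed.

Lemma size_blocks d k :
  size (flatten [seq alpha_block d n | n <- iota 0 k]) = (d * (2 ^ k - 1))%N.
Proof.
elim: k => [|k IH]; first by rewrite muln0.
rewrite -addn1 iotaD map_cat flatten_cat size_cat IH /= cats0 size_block add0n.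
have := expn_gt0 2 k; rewrite expnD expn1.
set x := (2 ^ k)%N => hx.
rewrite -mulnDr; congr (d * _)%N; lia.
Qed.

Lemma alpha_nat_at d k i r : (i < d)%N -> (r < 2 ^ k)%N ->
  alpha_nat d (d * (2 ^ k - 1) + i * 2 ^ k + r) = i.
Proof.
move=> id rk.
set s := (d * (2 ^ k - 1) + i * 2 ^ k + r)%N.
have kx : (k < 2 ^ k)%N by apply: ltn_expl.
have ks : (k <= s)%N.
  rewrite /s; have : (1 <= d)%N by lia.
  set x := (2 ^ k)%N in kx rk *; move=> hd; nia.
rewrite /alpha_nat.
have -> : iota 0 s.+1 = iota 0 k ++ k :: iota k.+1 (s - k).
  by rewrite -[s.+1](subnKC (leqW ks)) iotaD add0n subSn.
rewrite map_cat flatten_cat nth_cat size_blocks.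
have -> : (s < d * (2 ^ k - 1))%N = false by rewrite /s ltnNge -addnA leq_addr.
rewrite /= nth_cat size_block.
have -> : (s - d * (2 ^ k - 1) = i * 2 ^ k + r)%N by rewrite /s -addnA addKn.
have -> : (i * 2 ^ k + r < d * 2 ^ k)%N = true.
  set x := (2 ^ k)%N in rk *; nia.
by rewrite /alpha_block nth_flat_nseq.
Qed.

Lemma alpha_knock_at d (hd : (0 < d)%N) k (i : 'I_d) r : (r < 2 ^ k)%N ->
  alpha_knock hd (d * (2 ^ k - 1) + i * 2 ^ k + r) = i.
Proof.
move=> rk; apply: val_inj => /=; rewrite alpha_nat_at // modn_small //.
Qed.

Local Open Scope ring_scope.

Lemma alpha_bound (R : realType) d (hd : (0 < d)%N) (phi : 'I_d -> seq {set 'I_d} -> R)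
  (hphi : valid_config phi) t k : (d * (2 ^ k.+1 - 1) <= t)%N ->
  1 - prob_all_open phi (alpha_knock hd) t <= \sum_(i : 'I_d) fund phi i (2 ^ k).
Proof.
move=> dt.
have x0 := expn_gt0 2 k.
apply: (@generic_bound R d phi (alpha_knock hd) hphi t (fun i : 'I_d => d * (2 ^ k - 1) + i * 2 ^ k)%N (2 ^ k)%N).
- move=> i s /andP[h1 h2].
  have -> : s = (d * (2 ^ k - 1) + i * 2 ^ k + (s - (d * (2 ^ k - 1) + i * 2 ^ k)))%N.
    by rewrite subnKC.
  apply: alpha_knock_at; move: h1 h2; set x := (2 ^ k)%N; lia.
- move=> i j ji; set x := (2 ^ k)%N in x0 *; nia.
- move=> i; move: dt; rewrite expnS; have := ltn_ord i.
  set x := (2 ^ k)%N in x0 *; nia.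
Qed.

Lemma bern (R : realType) (y : R) n : 0 <= y <= 1 -> (1 - y) ^+ n * (1 + n%:R * y) <= 1.
Proof.
move=> /andP[y0 y1].
elim: n => [|n IH]; first by rewrite expr0 mul0r addr0 mulr1.
have z0 : 0 <= (1 - y) ^+ n by apply: exprn_ge0; rewrite subr_ge0.
have N0 : 0 <= n%:R :> R by rewrite ler0n.
rewrite exprS -addn1 natrD.
set z := (1 - y) ^+ n in z0 IH *.
set N := n%:R in N0 IH *.
have P : 0 <= z * (y * y * (N + 1)) by rewrite !mulr_ge0 // addr_ge0.
have -> : (1 - y) * z * (1 + (N + 1%:R) * y) = z * (1 + N * y) - z * (y * y * (N + 1)) by ring.
lra.
Qed.

Lemma key (R : realType) (y F : R) n d : 0 <= y <= 1 -> (d <= 2 * n)%N ->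
  F <= 1 -> F <= d%:R * y -> F <= 4 * (1 - (1 - y) ^+ n).
Proof.
move=> y01 dn F1 Fd.
have B := bern n y01.
case/andP: y01 => y0 y1.
have z0 : 0 <= (1 - y) ^+ n by apply: exprn_ge0; rewrite subr_ge0.
have z1 : (1 - y) ^+ n <= 1 by apply: exprn_ile1; rewrite ?subr_ge0 // lerBlDr lerDl.
have hx : d%:R * y <= 2 * (n%:R * y).
  by rewrite mulrA -natrM ler_wpM2r // ler_nat.
set z := (1 - y) ^+ n in z0 z1 B *.
set x := n%:R * y in hx B *.
have x0 : 0 <= x by rewrite mulr_ge0 // ler0n.
case: (lerP x 1) => x1; nra.
Qed.

Lemma fund_antimono (R : realType) d (phi : 'I_d -> seq {set 'I_d} -> R)
  (hphi : valid_config phi) i n n' : (n <= n')%N -> fund phi i n' <= fund phi i n.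
Proof.
move=> nn; rewrite /fund lerD2l lerN2.
case: hphi => _ _ H _; apply: H.
- rewrite /seq_below all_nseq; apply/orP; right; exact: subxx.
- rewrite /seq_below all_nseq; apply/orP; right; exact: subxx.
by rewrite -(subnKC nn) nseqD prefix_subseq.
Qed.

Lemma sumK d (pi : nat -> 'I_d) s : (\sum_(i : 'I_d) K pi i s)%N = s.
Proof.
elim: s => [|s IH]; first by rewrite big1.
have E : forall i, K pi i s.+1 = (K pi i s + (pi s == i))%N.
  by move=> i; rewrite /K -addn1 iotaD count_cat /= addn0.
rewrite (eq_bigr _ (fun i _ => E i)) big_split /= IH.
rewrite (bigD1 (pi s)) //= eqxx big1 ?addn0 ?addn1 // => i.
by rewrite eq_sym => /negbTE ->.
Qed.

Lemma P01 (R : realType) d (phi : 'I_d -> seq {set 'I_d} -> R)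
  (hphi : valid_config phi) pi t : 0 <= prob_all_open phi pi t <= 1.
Proof.
rewrite prob_all_open_W; apply/andP; split.
  by rewrite -(W_const phi pi t 0); apply: W_le => // h _ _; rewrite ler0n.
by rewrite -[X in _ <= X](W_const phi pi t 1); apply: W_le => // h _ _; rewrite lern1 leq_b1.
Qed.

Lemma G_lower (R : realType) d (hd : (0 < d)%N) (phi : 'I_d -> seq {set 'I_d} -> R)
  (hphi : valid_config phi) (hs : same_fundamental phi) (i0 : 'I_d) pi s (F : R) :
  F <= 1 -> F <= d%:R * fund phi i0 ((2 * s) %/ d) ->
  F <= 4 * (1 - prob_all_open phi pi s).
Proof.
move=> F1 Fd.
pose A := [set i : 'I_d | (K pi i s * d <= 2 * s)%N].
have cnt : (d <= 2 * #|A|)%N.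
  have S1 : (\sum_(i : 'I_d | i \notin A) (2 * s).+1 <= \sum_(i : 'I_d | i \notin A) K pi i s * d)%N.
    by apply: leq_sum => i; rewrite inE -ltnNge.
  have S2 : (\sum_(i : 'I_d | i \notin A) K pi i s * d <= s * d)%N.
    have Sall : (\sum_(i : 'I_d) K pi i s * d = s * d)%N by rewrite -big_distrl /= sumK.
    rewrite -Sall [X in (_ <= X)%N](bigID (mem A)) /=; exact: leq_addl.
  rewrite sum_nat_const in S1.
  have C := cardC A; rewrite card_ord in C.
  move: (leq_trans S1 S2) C; rewrite /predC.
  set a := #|A|; set b := #|_|; move=> H C.
  nia.
set y := fund phi i0 ((2 * s) %/ d).
have /andP[y0 y1] := fund01 hphi i0 ((2 * s) %/ d).
have Ple : prob_all_open phi pi s <= (1 - y) ^+ #|A|.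
  apply: (le_trans (@prod_bound_all R d phi pi hphi s)).
  rewrite (bigID (mem A)) /= -[X in _ <= X]mulr1.
  have f01 : forall i, 0 <= 1 - fund phi i (K pi i s) <= 1.
    move=> i; have /andP[a b] := fund01 hphi i (K pi i s).
    by rewrite subr_ge0 b /= lerBlDr lerDl.
  apply: ler_pM.
  - by apply: prodr_ge0 => i _; case/andP: (f01 i).
  - by apply: prodr_ge0 => i _; case/andP: (f01 i).
  - rewrite -prodr_const; apply: ler_prod => i iA.
    case/andP: (f01 i) => -> _ /=; rewrite lerD2l lerN2 /y (hs i0 i).
    apply: fund_antimono => //; rewrite leq_divRL //.
    by move: iA; rewrite inE.
  - by apply: prodr_ile1 => i _; exact: f01.
apply: le_trans (key (n := #|A|) _ cnt F1 Fd) _; first by rewrite y0 y1.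
by rewrite ler_wpM2l // lerD2l lerN2.
Qed.

Lemma pointwise (R : realType) d (hd2 : (2 <= d)%N) (phi : 'I_d -> seq {set 'I_d} -> R)
  (hphi : valid_config phi) (hs : same_fundamental phi) pi t :
  1 - prob_all_open phi (alpha_knock (ltnW hd2)) t <=
  (1 - prob_all_open phi pi t) + 4 * (1 - prob_all_open phi pi (t %/ 8)).
Proof.
set hd := ltnW hd2.
pose i0 : 'I_d := Ordinal hd.
have G0 : forall u, 0 <= 1 - prob_all_open phi pi u.
  by move=> u; have /andP[_ h] := P01 hphi pi u; rewrite subr_ge0.
have F1 : 1 - prob_all_open phi (alpha_knock hd) t <= 1.
  by have /andP[h _] := P01 hphi (alpha_knock hd) t; rewrite lerBlDr lerDl.
have Gt8 := G0 (t %/ 8)%N.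
case: (ltnP t d) => td.
  have : prob_all_open phi pi t <= 0.
    apply: (le_trans (@prod_bound_all R d phi pi hphi t)).
    have [i Ki] : exists i, K pi i t = 0%N.
      case: (pickP (fun i : 'I_d => K pi i t == 0%N)) => [i /eqP Ki|none].
        by exists i.
      exfalso; have : (d <= t)%N.
        rewrite -(sumK pi t) -[X in (X <= _)%N]card_ord -sum1_card.
        by apply: leq_sum => i _; rewrite lt0n none.
      by rewrite leqNgt td.
    rewrite (bigD1 i) //= Ki /fund /=.
    case: hphi => h0 _ _ _; rewrite h0 subr0 subrr mul0r //.
  move=> P0; lra.
have n0 : (0 < (t %/ d).+1)%N by [].
have h1 := trunc_logP (isT : (1 < 2)%N) n0.
have h2 := trunc_log_ltn (t %/ d).+1 (isT : (1 < 2)%N).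
have tdd : (t %/ d * d <= t)%N := leq_trunc_div t d.
have tdd2 : (t < (t %/ d).+1 * d)%N := ltn_ceil t hd.
have t8 : (t %/ 8 * 8 <= t)%N := leq_trunc_div t 8.
move: h1 h2; set K' := trunc_log 2 (t %/ d).+1.
case: K' => [|k] h1 h2.
  exfalso; move: h2; rewrite expn1 ltnS => h2.
  have : (t %/ d = 0)%N by lia.
  move=> E; move: tdd2; rewrite E mul1n => h; lia.
have A := @alpha_bound R d hd phi hphi t k.
have Ak : (d * (2 ^ k.+1 - 1) <= t)%N.
  move: h1 tdd; set x := (2 ^ k.+1)%N; set q := (t %/ d)%N; nia.
have {}A := A Ak.
have Sd : \sum_(i : 'I_d) fund phi i (2 ^ k) = d%:R * fund phi i0 (2 ^ k).
  rewrite (eq_bigr (fun _ => fund phi i0 (2 ^ k))) => [|i _]; last exact: hs.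
  by rewrite sumr_const card_ord mulr_natl.
have mono8 : (((2 * (t %/ 8)) %/ d) <= 2 ^ k)%N.
  rewrite -ltnS ltn_divLR //.
  move: h2 tdd2 t8; rewrite !expnS; set x := (2 ^ k)%N; set q := (t %/ d)%N; set r := (t %/ 8)%N.
  nia.
have Fd : 1 - prob_all_open phi (alpha_knock hd) t <= d%:R * fund phi i0 ((2 * (t %/ 8)) %/ d).
  apply: (le_trans A); rewrite Sd ler_wpM2l ?ler0n //.
  exact: fund_antimono.
have := @G_lower R d hd phi hphi hs i0 pi (t %/ 8)%N _ F1 Fd.
have := G0 t; lra.
Qed.

Lemma sum8 (R : realType) (a : nat -> R) n :
  \sum_(0 <= t < 8 * n) a (t %/ 8)%N = \sum_(0 <= s < n) (8 * a s).
Proof.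
elim: n => [|n IH]; first by rewrite muln0 !big_geq.
rewrite (@big_cat_nat _ _ _ (8 * n)) //=; last by rewrite leq_mul2l leqnSn orbT.
rewrite IH [in RHS]big_nat_recr //=; congr (_ + _).
rewrite (@eq_big_nat _ _ _ _ _ _ (fun _ => a n)) => [|t /andP[t1 t2]]; last first.
  by congr a; lia.
rewrite sumr_const_nat (_ : (8 * n.+1 - 8 * n)%N = 8%N); last lia.
rewrite -mulr_natl; by rewrite mulr1 mulr_natl.
Qed.

Local Open Scope ereal_scope.

Lemma series_div8 (R : realType) (a : nat -> R) : (forall n, (0 <= a n)%R) ->
  \sum_(0 <= t <oo) (a (t %/ 8)%N)%:E <= 8%:E * \sum_(0 <= t <oo) (a t)%:E.
Proof.
move=> a0.
rewrite -nneseriesZl; last by move=> i _; rewrite lee_fin.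
apply: lime_le.
  by apply: is_cvg_nneseries => n _ _; rewrite lee_fin.
apply: nearW => n.
apply: le_trans; last first.
  by apply: (nneseries_lim_ge n) => i _ _; rewrite -EFinM lee_fin mulr_ge0.
rewrite sumEFin.
rewrite (eq_bigr (fun i => (8 * a i)%R%:E)) => [|i _]; last by rewrite EFinM.
rewrite sumEFin lee_fin -sum8.
rewrite [X in (_ <= X)%R](@big_cat_nat _ _ _ n) //=; last by rewrite leq_pmull.
by rewrite lerDl; apply: sumr_ge0 => i _.
Qed.

Lemma per_pi (R : realType) d (hd : (2 <= d)%N) (phi : 'I_d -> seq {set 'I_d} -> R)
  (hphi : valid_config phi) (hs : same_fundamental phi) pi :
  exp_time phi (alpha_knock (ltnW hd)) <= (1 + 4 * 8)%R%:E * exp_time phi pi.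
Proof.
have G0 : forall u, (0 <= 1 - prob_all_open phi pi u)%R.
  by move=> u; have /andP[_ h] := P01 hphi pi u; rewrite subr_ge0.
have F0 : forall u, (0 <= 1 - prob_all_open phi (alpha_knock (ltnW hd)) u)%R.
  by move=> u; have /andP[_ h] := P01 hphi (alpha_knock (ltnW hd)) u; rewrite subr_ge0.
rewrite /exp_time.
apply: le_trans.
  apply: (lee_nneseries (v := fun t => (1 - prob_all_open phi pi t)%:E +
                     4%:E * (1 - prob_all_open phi pi (t %/ 8)%N)%:E)).
    by move=> i _ _; rewrite lee_fin.
  by move=> n _; rewrite -EFinM -EFinD lee_fin; apply: pointwise.
rewrite nneseriesD; last 2 first.
- by move=> i _ _; rewrite lee_fin.
- by move=> i _ _; rewrite mule_ge0 // lee_fin.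
rewrite nneseriesZl; last by move=> i _; rewrite lee_fin.
set S := \sum_(0 <= t <oo) (1 - prob_all_open phi pi t)%:E.
have S0 : 0 <= S by apply: nneseries_ge0 => i _ _; rewrite lee_fin.
apply: le_trans.
  apply: leeD2l; apply: lee_wpmul2l; first by rewrite lee_fin.
  by move: (series_div8 G0) => /= H; exact: H.
rewrite muleA -EFinM -[X in X + _ <= _]mul1e -ge0_muleDl ?lee_fin //.
Qed.

Local Close Scope ereal_scope.
Unset Implicit Arguments.

Theorem mainTheorem5 (R : realType) :
  exists c1 c2 : R, 0 < c1 /\ 0 < c2 /\
  forall (d : nat) (hd : (2 <= d)%N) (phi : 'I_d -> seq {set 'I_d} -> R),
    valid_config phi -> finite_expectations phi -> same_fundamental phi ->
    (c1%:E * opt_time phi <= exp_time phi (alpha_knock (ltnW hd)) /\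
     exp_time phi (alpha_knock (ltnW hd)) <= c2%:E * opt_time phi)%E.
Proof.
exists 1%R, (1 + 4 * 8)%R; split; first by rewrite ltr01.
split; first by [].
move=> d hd phi hphi _ hs; split.
  rewrite mul1e; apply: ereal_inf_lbound; by exists (alpha_knock (ltnW hd)).
set c := (1 + 4 * 8)%R.
have c0 : (0 < c)%R by rewrite /c.
set ea := exp_time phi (alpha_knock (ltnW hd)).
have lb : ((c^-1)%:E * ea <= opt_time phi)%E.
  apply: le_ereal_inf_tmp => _ [pi _ <-].
  apply: le_trans; first apply: (lee_wpmul2l _ (per_pi hd hphi hs pi)).
    by rewrite lee_fin invr_ge0 ltW.
  by rewrite muleA -EFinM mulVf ?gt_eqF // mul1e.
apply: le_trans; last first.
  apply: lee_wpmul2l; last exact: lb.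
  by rewrite lee_fin ltW.
by rewrite muleA -EFinM mulfV ?gt_eqF // mul1e.
Qed.
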